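(* Let $\omega$ be a weight function and let $\mathcal M_\omega=(\mathbf W^{(\lambda)})_{\lambda>0}$, $W^{(\lambda)}_\alpha:=e^{\frac1\lambda\varphi^*_\omega(\lambda|\alpha|)}$. Then $\Lambda_{\{\omega\}}=\Lambda_{\{\mathcal M_\omega\}}$ and $\Lambda_{(\omega)}=\Lambda_{(\mathcal M_\omega)}$, and these equalities are also topological.
   Context: A weight function is a continuous increasing function $\omega:[0,+\infty)\to[0,+\infty)$ such that: ($\alpha$) there is $L\ge1$ with $\omega(2t)\le L(\omega(t)+1)$ for all $t\ge0$; ($\beta$) $\omega(t)=O(t^2)$ as $t\to+\infty$; ($\gamma$) $\log t=o(\omega(t))$ as $t\to+\infty$; ($\delta$) $\varphi_\omega(t):=\omega(e^t)$ is convex on $[0,+\infty)$. For $t\in\mathbb R^d$, $\omega(t):=\omega(|t|)$. Young conjugate: $\varphi_\omega^*(s):=\sup_{t\ge0}\{ts-\varphi_\omega(t)\}$. $\alpha^{1/2}:=(\alpha_1^{1/2},\dots,\alpha_d^{1/2})$. $\Lambda_{\{\omega\}}$ is the set of $\mathbf c=(c_\alpha)\in\mathbb C^{\mathbb N_0^d}$ such that $\sup_\alpha|c_\alpha|e^{\frac1j\omega(\alpha^{1/2}/j)}<\infty$ for some $j\in\mathbb N$ (inductive limit topology); $\Lambda_{(\omega)}$ is the set of $\mathbf c$ with $\sup_\alpha|c_\alpha|e^{j\omega(j\alpha^{1/2})}<\infty$ for all $j\in\mathbb N$ (projective limit topology). For a sequence $\mathbf M=(M_\alpha)$, $\omega_{\mathbf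 M}(t)=\sup_{\alpha\in\mathbb N^d_{0,t}}\log\frac{|t^\alpha|}{M_\alpha}$, where $\mathbb N^d_{0,t}=\{\alpha:\alpha_j=0\text{ whenever }t_j=0\}$, $0^0=1$; $\|\mathbf c\|_{\mathbf M,h}:=\sup_\alpha|c_\alpha|e^{\omega_{\mathbf M}(\alpha^{1/2}/h)}$. $\Lambda_{\{\mathcal M_\omega\}}$ is the set of $\mathbf c$ with $\|\mathbf c\|_{\mathbf W^{(\lambda)},h}<\infty$ for some $\lambda,h>0$ (inductive limit over $j$ of the norms $\|\cdot\|_{\mathbf W^{(j)},j}$); $\Lambda_{(\mathcal M_\omega)}$ the set with this finite for all $\lambda,h>0$ (projective limit of the norms $\|\cdot\|_{\mathbf W^{(1/j)},1/j}$). *)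

(* Defs.v *)
From mathcomp Require Import all_boot all_order all_algebra.
From mathcomp Require Import all_classical all_reals all_analysis.
From mathcomp Require Import complex.
Import Order.TTheory GRing.Theory Num.Theory ComplexField.
Import numFieldNormedType.Exports.

Set Implicit Arguments.
Unset Strict Implicit.
Unset Printing Implicit Defensive.

Local Open Scope classical_set_scope.
Local Open Scope ring_scope.

Section Defs.
Variable R : realType.

Definition is_weight (om : R -> R) : Prop :=
  {within [set t : R | 0 <= t], continuous om} /\
  (forall t, 0 <= t -> 0 <= om t) /\
  (forall s t, 0 <= s -> s <= t -> om s <= om t) /\
  (exists L : R, 1 <= L /\ forall t, 0 <= t -> om (2 * t) <= L * (om t + 1)) /\
  (exists C T : R, forall t, T <= t -> `|om t| <= C * `|t ^+ 2|) /\
  (* (gamma) log t = o(om t) as t -> +oo *)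
  (forall eps : R, 0 < eps -> exists T : R, forall t, T <= t ->
      `|ln t| <= eps * `|om t|) /\
  (* (delta) phi_om(t) = om(e^t) convex on [0,+oo) *)
  (forall x y th : R, 0 <= x -> 0 <= y -> 0 <= th <= 1 ->
      om (expR (th * x + (1 - th) * y))
        <= th * om (expR x) + (1 - th) * om (expR y)).

Definition phi_om (om : R -> R) (t : R) : R := om (expR t).

(* Young conjugate, as an extended real (finite for weight functions) *)
Definition phistar (om : R -> R) (s : R) : \bar R :=
  ereal_sup [set ((t * s - phi_om om t)%:E) | t in [set t : R | 0 <= t]].

Definition mi (d : nat) := 'I_d -> nat.

Definition mi_abs d (a : mi d) : nat := (\sum_(i < d) a i)%N.

Definition mi_sqrt d (a : mi d) : 'I_d -> R := fun i => Num.sqrt (a i)%:R.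

(* Euclidean norm on R^d, and om(t) := om(|t|) *)
Definition eucl d (t : 'I_d -> R) : R := Num.sqrt (\sum_(i < d) t i ^+ 2).

Definition seqC d := mi d -> R[i].

(* sup_alpha |c_alpha| w_alpha, in the extended reals (0 * +oo = 0) *)
Definition wnorm d (w : mi d -> \bar R) (c : seqC d) : \bar R :=
  ereal_sup [set ((Normc.normc (c a))%:E * w a)%E | a in [set: mi d]].

Definition Wlam (om : R -> R) (lam : R) d (a : mi d) : R :=
  expR (lam^-1 * fine (phistar om (lam * (mi_abs a)%:R))).

Definition omegaM d (M : mi d -> R) (t : 'I_d -> R) : \bar R :=
  ereal_sup [set (ln (`| \prod_(i < d) t i ^+ a i | / M a))%:E
            | a in [set a : mi d | forall i, t i = 0 -> a i = 0%N]].

Definition normMh d (M : mi d -> R) (h : R) (c : seqC d) : \bar R :=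
  wnorm (fun a => expeR (omegaM M (fun i => mi_sqrt a i / h))) c.

Definition norm_om_inf (om : R -> R) d (n : nat) (c : seqC d) : \bar R :=
  let j : R := n.+1%:R in
  wnorm (fun a => (expR (j^-1 * om (eucl (fun i => mi_sqrt a i / j))))%:E) c.

Definition norm_om_proj (om : R -> R) d (n : nat) (c : seqC d) : \bar R :=
  let j : R := n.+1%:R in
  wnorm (fun a => (expR (j * om (eucl (fun i => j * mi_sqrt a i))))%:E) c.

Definition norm_M_inf (om : R -> R) d (n : nat) (c : seqC d) : \bar R :=
  normMh (@Wlam om n.+1%:R d) n.+1%:R c.

Definition norm_M_proj (om : R -> R) d (n : nat) (c : seqC d) : \bar R :=
  normMh (@Wlam om (n.+1%:R)^-1 d) (n.+1%:R)^-1 c.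

Definition Lam_om_inf (om : R -> R) d : set (seqC d) :=
  [set c | exists n : nat, (norm_om_inf om n c < +oo)%E].
Definition Lam_om_proj (om : R -> R) d : set (seqC d) :=
  [set c | forall n : nat, (norm_om_proj om n c < +oo)%E].
Definition Lam_M_inf (om : R -> R) d : set (seqC d) :=
  [set c | exists lam h : R, 0 < lam /\ 0 < h /\
           (normMh (@Wlam om lam d) h c < +oo)%E].
Definition Lam_M_proj (om : R -> R) d : set (seqC d) :=
  [set c | forall lam h : R, 0 < lam -> 0 < h ->
           (normMh (@Wlam om lam d) h c < +oo)%E].

Definition seq_add d (x y : seqC d) : seqC d := fun a => x a + y a.

Definition absconvex d (V : set (seqC d)) : Prop :=
  forall x y, V x -> V y -> forall s t : R[i],
    Normc.normc s + Normc.normc t <= 1 -> V (fun a => s * x a + t * y a).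

(* 0-neighbourhoods of the locally convex inductive limit on E of the
   normed steps X_n = {c | p n c < +oo}: U contains an absolutely convex
   V in E whose trace on every step X_n is a 0-neighbourhood of X_n. *)
Definition lc_ind_nbhd0 d (p : nat -> seqC d -> \bar R) (E U : set (seqC d)) :=
  exists V : set (seqC d), V `<=` E /\ absconvex V /\ V `<=` U /\
    forall n, exists eps : R, 0 < eps /\ [set c | (p n c < eps%:E)%E] `<=` V.

Definition lc_ind_open d (p : nat -> seqC d -> \bar R) (E U : set (seqC d)) :=
  U `<=` E /\ forall x, U x -> lc_ind_nbhd0 p E [set c | U (seq_add x c)].

(* 0-neighbourhoods of the projective limit (topology of the seminorms p n) *)
Definition lc_proj_nbhd0 d (p : nat -> seqC d -> \bar R) (E U : set (seqC d)) :=
  exists (N : nat) (eps : R), 0 < eps /\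
    [set c | E c /\ forall n, (n <= N)%N -> (p n c < eps%:E)%E] `<=` U.

Definition lc_proj_open d (p : nat -> seqC d -> \bar R) (E U : set (seqC d)) :=
  U `<=` E /\ forall x, U x -> lc_proj_nbhd0 p E [set c | U (seq_add x c)].

End Defs.

(* Main.v *)
Require Import Defs.
From mathcomp Require Import all_boot all_order all_algebra.
From mathcomp Require Import all_classical all_reals all_analysis.
From mathcomp Require Import complex.
From mathcomp Require Import ring lra.
Import Order.TTheory GRing.Theory Num.Theory ComplexField.
Import numFieldNormedType.Exports.
Local Open Scope classical_set_scope.
Local Open Scope ring_scope.


Section G.
Variable R : realType.
Variable d : nat.
Local Open Scope ereal_scope.

Lemma normc_ge0 (z : R[i]) : (0 <= Normc.normc z)%R.
Proof. by case: z => a b; rewrite /Normc.normc sqrtr_ge0. Qed.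

Lemma wnorm_le (w1 w2 : mi d -> \bar R) (C : R) (c : seqC R d) :
  (0 <= C)%R -> (forall a, w1 a <= C%:E * w2 a) ->
  wnorm w1 c <= C%:E * wnorm w2 c.
Proof.
move=> C0 H; apply: ge_ereal_sup => _ [a _ <-].
apply: (le_trans (lee_wpmul2l _ (H a))); first by rewrite lee_fin normc_ge0.
rewrite muleCA; apply: lee_wpmul2l; first by rewrite lee_fin.
by apply: ereal_sup_ubound; exists a.
Qed.

Lemma lt_mulC {C : R} {x} {e : R} : (0 < C)%R -> x < e%:E -> C%:E * x < (C * e)%:E.
Proof. by move=> C0 xe; rewrite EFinM lte_pmul2l // lte_fin. Qed.

Lemma fin_mulC {C : R} {x} : (0 <= C)%R -> x < +oo -> C%:E * x < +oo.
Proof. by move=> C0 xe; apply: lte_mul_pinfty. Qed.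

Lemma ind_tr (p q : nat -> seqC R d -> \bar R) E U :
  (forall m, exists n, exists C : R, (0 < C)%R /\ forall c, p n c <= C%:E * q m c) ->
  lc_ind_nbhd0 p E U -> lc_ind_nbhd0 q E U.
Proof.
move=> H [V [VE [Vac [VU HV]]]]; exists V; do 3!split => //.
move=> m; have [n [C [C0 HC]]] := H m; have [eps [eps0 Heps]] := HV n.
exists (eps / C)%R; split; first by rewrite divr_gt0.
move=> c /= qc; apply: Heps => /=.
apply: (le_lt_trans (HC c)); have := lt_mulC C0 qc.
by rewrite mulrC divfK // gt_eqF.
Qed.

Lemma proj_tr (p q : nat -> seqC R d -> \bar R) E U :
  (forall m, exists n, exists C : R, (0 < C)%R /\ forall c, q m c <= C%:E * p n c) ->
  lc_proj_nbhd0 q E U -> lc_proj_nbhd0 p E U.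
Proof.
move=> H [N [eps [eps0 HN]]].
have key : forall N, exists M, exists K : R, (0 < K)%R /\ forall c e, (0 < e)%R ->
   (forall n, (n <= M)%N -> p n c < e%:E) -> forall m, (m <= N)%N -> q m c < (K * e)%:E.
  elim=> [|N' [M1 [K1 [K10 IH]]]].
    have [n0 [C0 [C00 HC]]] := H 0%N.
    exists n0, C0; split => // c e e0 hp m; rewrite leqn0 => /eqP ->.
    by apply: (le_lt_trans (HC c)); apply: lt_mulC => //; apply: hp.
  have [n0 [C0 [C00 HC]]] := H N'.+1.
  exists (maxn M1 n0), (K1 + C0)%R; split; first by rewrite addr_gt0.
  move=> c e e0 hp m; rewrite leq_eqVlt ltnS => /orP [/eqP ->|mN].
    apply: (le_lt_trans (HC c)); apply: (lt_le_trans (lt_mulC C00 (hp n0 _))).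
      by rewrite leq_maxr.
    by rewrite lee_fin ler_wpM2r ?(ltW e0) // lerDr ltW.
  apply: (lt_le_trans (IH c e e0 _ m mN)).
    by move=> n nM; apply: hp; rewrite (leq_trans nM) // leq_maxl.
  by rewrite lee_fin ler_wpM2r ?(ltW e0) // lerDl ltW.
have [M [K [K0 HK]]] := key N.
exists M, (eps / K)%R; split; first by rewrite divr_gt0.
move=> c [Ec hc]; apply: HN; split => // m mN.
have := HK c _ (divr_gt0 eps0 K0) hc m mN.
by rewrite mulrC divfK // gt_eqF.
Qed.

Lemma ind_open_iff (p q : nat -> seqC R d -> \bar R) E U :
  (forall m, exists n, exists C : R, (0 < C)%R /\ forall c, p n c <= C%:E * q m c) ->
  (forall m, exists n, exists C : R, (0 < C)%R /\ forall c, q n c <= C%:E * p m c) ->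
  lc_ind_open p E U <-> lc_ind_open q E U.
Proof.
move=> H1 H2; split=> [[UE HU]|[UE HU]]; split => // x Ux.
  exact: ind_tr H1 (HU x Ux).
exact: ind_tr H2 (HU x Ux).
Qed.

Lemma proj_open_iff (p q : nat -> seqC R d -> \bar R) E U :
  (forall m, exists n, exists C : R, (0 < C)%R /\ forall c, p m c <= C%:E * q n c) ->
  (forall m, exists n, exists C : R, (0 < C)%R /\ forall c, q m c <= C%:E * p n c) ->
  lc_proj_open p E U <-> lc_proj_open q E U.
Proof.
move=> H1 H2; split=> [[UE HU]|[UE HU]]; split => // x Ux.
  exact: proj_tr H1 (HU x Ux).
exact: proj_tr H2 (HU x Ux).
Qed.
End G.
Section W.
Variable R : realType.
Variable om : R -> R.
Hypothesis om_ge0 : forall t, 0 <= t -> 0 <= om t.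
Hypothesis om_mono : forall s t, 0 <= s -> s <= t -> om s <= om t.
Hypothesis om_gamma : forall eps : R, 0 < eps -> exists T : R, forall t, T <= t ->
      `|ln t| <= eps * `|om t|.
Hypothesis om_conv : forall x y th : R, 0 <= x -> 0 <= y -> 0 <= th <= 1 ->
      om (expR (th * x + (1 - th) * y))
        <= th * om (expR x) + (1 - th) * om (expR y).

Let phi t := phi_om om t.

Lemma phi_ge0 t : 0 <= phi t.
Proof. by apply: om_ge0; rewrite expR_ge0. Qed.

Lemma phi_mono {x y} : 0 <= x -> x <= y -> phi x <= phi y.
Proof. by move=> _ xy; apply: om_mono; rewrite ?expR_ge0 ?ler_expR. Qed.

Lemma phistar_bnd s : 0 <= s -> exists B, forall t, 0 <= t -> t * s - phi t <= B.
Proof.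
move=> s0; have s1 : 0 < s + 1 by lra.
have [T HT] : exists T : R, forall t, T <= t -> `|ln t| <= (s+1)^-1 * `|om t| by apply: om_gamma; rewrite invr_gt0.
exists (s * `|T|) => t t0.
have ph0 := phi_ge0 t.
have sT : 0 <= s * `|T| by rewrite mulr_ge0.
have [Te|eT] := leP T (expR t).
  have := HT _ Te; rewrite expRK ger0_norm // ger0_norm //.
  rewrite ler_pdivlMl //= => h.
  rewrite /phi /phi_om; nra.
have tT : t <= `|T|.
  have := expR_ge1Dx t; have := ler_norm T; lra.
nra.
Qed.

Lemma phistar_fin {s} : 0 <= s ->
  exists ps : R, phistar om s = ps%:E /\
   (forall t, 0 <= t -> t * s - phi t <= ps) /\
   (forall B, (forall t, 0 <= t -> t * s - phi t <= B) -> ps <= B).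
Proof.
move=> s0; have [B HB] := phistar_bnd s s0.
have ub : (phistar om s <= B%:E)%E.
  apply: ge_ereal_sup => _ [t t0 <-]; rewrite lee_fin; exact: HB.
have lb : ((0 * s - phi 0)%:E <= phistar om s)%E.
  by apply: ereal_sup_ubound; exists 0 => //=.
have fin : phistar om s \is a fin_num.
  rewrite fin_numE; apply/andP; split.
    by apply/eqP => h; rewrite h in lb.
  by apply/eqP => h; rewrite h in ub.
exists (fine (phistar om s)); split; first by rewrite fineK.
split.
  move=> t t0; rewrite -lee_fin fineK //; apply: ereal_sup_ubound; by exists t.
move=> B' HB'; rewrite -lee_fin fineK //.
apply: ge_ereal_sup => _ [t t0 <-]; rewrite lee_fin; exact: HB'.
Qed.

Lemma three_slope y x z : 0 <= y -> y < x -> x < z ->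
  (phi x - phi y) / (x - y) <= (phi z - phi x) / (z - x).
Proof.
move=> y0 yx xz.
have zy : 0 < z - y by lra.
have [th [th0 th1 e1 e]] : exists th, [/\ 0 <= th, th <= 1, (z - y) * th = z - x & th * y + (1 - th) * z = x].
  exists ((z - x) / (z - y)); split.
  - by rewrite divr_ge0 //; lra.
  - by rewrite ler_pdivrMr //; lra.
  - by field; apply/eqP; lra.
  - by field; apply/eqP; lra.
have h : phi x <= th * phi y + (1 - th) * phi z.
  rewrite /phi /phi_om -{1}e; apply: om_conv => //; first lra.
  by apply/andP.
have h' : (z - y) * phi x <= (z - y) * (th * phi y + (1 - th) * phi z).
  by rewrite ler_wpM2l //; lra.
have e2 : (z - y) * (1 - th) = x - y by rewrite mulrBr mulr1 e1; ring.
have h'' : (z - y) * phi x <= (z - x) * phi y + (x - y) * phi z.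
  by rewrite -e1 -e2 -!mulrA -mulrDr.
rewrite ler_pdivrMr; last lra.
rewrite mulrAC ler_pdivlMr; last lra.
nra.
Qed.

Lemma support {x} : 0 <= x -> exists s, 0 <= s /\
  forall y, 0 <= y -> phi x + s * (y - x) <= phi y.
Proof.
move=> x0.
pose S := [set (phi z - phi x) / (z - x) | z in [set z | x < z]].
have Slb : lbound S 0.
  move=> _ [z /= xz <-]; rewrite divr_ge0 //; last lra.
  have := phi_mono x0 (ltW xz); lra.
have Sne : S !=set0 by exists ((phi (x+1) - phi x) / (x + 1 - x)); exists (x+1) => //=; lra.
exists (inf S); split; first exact: lb_le_inf.
move=> y y0; case: (ltgtP y x) => [yx|xy|->]; last by rewrite subrr mulr0 addr0.
- have : (phi x - phi y) / (x - y) <= inf S.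
    apply: lb_le_inf => // _ [z /= xz <-]; exact: three_slope.
  rewrite ler_pdivrMr; last lra.
  nra.
- have : inf S <= (phi y - phi x) / (y - x).
    by apply: ge_inf; [exists 0 | exists y].
  rewrite ler_pdivlMr; last lra.
  nra.
Qed.

Variable d : nat.

Definition ps (s : R) := fine (phistar om s).

Lemma ps_ub {s t} : 0 <= s -> 0 <= t -> t * s - phi t <= ps s.
Proof.
move=> s0 t0; have [p [e [H1 H2]]] := phistar_fin s0.
by rewrite /ps e /=; apply: H1.
Qed.

Lemma ps_lub {s} B : 0 <= s -> (forall t, 0 <= t -> t * s - phi t <= B) -> ps s <= B.
Proof.
move=> s0 HB; have [p [e [H1 H2]]] := phistar_fin s0.
by rewrite /ps e /=; apply: H2.
Qed.

Lemma ln_term lam (b : mi d) P : 0 < P ->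
  ln (P / @Wlam R om lam d b) = ln P - lam^-1 * ps (lam * (mi_abs b)%:R).
Proof.
move=> P0; rewrite /Wlam lnM ?posrE ?invr_gt0 ?expR_gt0 //.
by rewrite lnV ?posrE ?expR_gt0 // expRK.
Qed.

Lemma mi_le (a : mi d) i : (a i <= mi_abs a)%N.
Proof. by rewrite /mi_abs (bigD1 i) //= leq_addr. Qed.

Lemma omegaM_ub lam h (a : mi d) : 0 < lam -> 0 < h ->
  (omegaM (@Wlam R om lam d) (fun i => (mi_sqrt R a i / h)%R)
     <= ((om (Num.sqrt (mi_abs a)%:R / h) + om 1) / lam)%R%:E)%E.
Proof.
move=> l0 h0; apply: ge_ereal_sup => _ [b _ <-]; rewrite lee_fin.
set u := Num.sqrt (mi_abs a)%:R / h.
have u0 : 0 <= u by rewrite divr_ge0 ?sqrtr_ge0 ?(ltW h0).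
set L := lam^-1.
have L0 : 0 < L by rewrite invr_gt0.
have om10 : 0 <= om 1 by apply: om_ge0.
have omu0 : 0 <= om u by apply: om_ge0.
have Lom1 : 0 <= L * om 1 by rewrite mulr_ge0 // ltW.
have Lomu : 0 <= L * om u by rewrite mulr_ge0 // ltW.
rewrite (mulrC _ L) mulrDr.
set P := `| _ |.
have Pu : P <= u ^+ mi_abs b.
  rewrite /P normr_prod /mi_abs -prodrXr; apply: ler_prod => i _.
  rewrite normr_ge0 /= normrX; apply: lerXn2r; rewrite ?nnegrE ?normr_ge0 //.
  rewrite ger0_norm ?divr_ge0 ?sqrtr_ge0 ?(ltW h0) //.
  by rewrite ler_pM2r ?invr_gt0 // ler_sqrt ?ler0n // ler_nat mi_le.
have [P0|P0] : P = 0 \/ 0 < P.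
  have : 0 <= P by rewrite normr_ge0.
  by rewrite le_eqVlt => /orP [/eqP e|]; [left|right].
  by rewrite P0 mul0r ln0 //; lra.
rewrite ln_term // -/L.
set k : R := (mi_abs b)%:R.
have k0 : 0 <= k by rewrite ler0n.
have s0 : 0 <= lam * k by rewrite mulr_ge0 // ltW.
have ps0 := ps_ub s0 (lexx 0).
rewrite /phi /phi_om expR0 mul0r sub0r in ps0.
have LL : L * lam = 1 by rewrite mulVf // gt_eqF.
have [u1|u1] := leP 1 u.
  have ug : 0 < u := lt_le_trans ltr01 u1.
  have x0 : 0 <= ln u by apply: ln_ge0.
  have H := ps_ub s0 x0.
  rewrite /phi /phi_om lnK ?posrE // in H.
  have lnP : ln P <= k * ln u.
    apply: (le_trans (_ : ln P <= ln (u ^+ mi_abs b))).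
      by rewrite ler_ln ?posrE ?exprn_gt0.
    by rewrite lnXn // mulr_natl.
  have H2 : L * (ln u * (lam * k) - om u) <= L * ps (lam * k) by rewrite ler_wpM2l // ltW.
  have e : L * (ln u * (lam * k) - om u) = k * ln u - L * om u.
    by rewrite /L; field; rewrite gt_eqF.
  lra.
have lnP : ln P <= 0.
  apply: ln_le0; apply: (le_trans Pu); apply: exprn_ile1 => //; exact: ltW.
have H2 : L * (- om 1) <= L * ps (lam * k) by rewrite ler_wpM2l // ltW.
rewrite mulrN in H2.
lra.
Qed.

Lemma ps0_le0 : ps 0 <= 0.
Proof. by apply: ps_lub => // t _; rewrite mulr0 sub0r oppr_le0 phi_ge0. Qed.

Lemma omegaM_ge0 lam (t : 'I_d -> R) : 0 < lam ->
  (0 <= omegaM (@Wlam R om lam d) t)%E.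
Proof.
move=> l0; apply: le_ereal_sup_tmp.
exists (ln (`|\prod_(i < d) t i ^+ (fun _ => 0%N) i| / @Wlam R om lam d (fun _ => 0%N)))%:E.
  by exists (fun _ => 0%N).
have e1 : \prod_(i < d) t i ^+ (fun _ => 0%N) i = 1 by rewrite big1.
have e2 : mi_abs (fun _ : 'I_d => 0%N) = 0%N by rewrite /mi_abs big1.
rewrite e1 normr1 ln_term ?ltr01 // ln1 e2 mulr0 sub0r lee_fin oppr_ge0.
by rewrite mulr_ge0_le0 ?ps0_le0 // invr_ge0 ltW.
Qed.

Lemma omegaM_lb1 lam h (a : mi d) i : 0 < lam -> 0 < h ->
  1 <= mi_sqrt R a i / h ->
  ((om (mi_sqrt R a i / h) / lam - ln (mi_sqrt R a i / h))%R%:E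
     <= omegaM (@Wlam R om lam d) (fun j => (mi_sqrt R a j / h)%R))%E.
Proof.
move=> l0 h0 v1; set v := mi_sqrt R a i / h.
have v0 : 0 < v := lt_le_trans ltr01 v1.
have x0 : 0 <= ln v by apply: ln_ge0.
set x := ln v.
have [s [s0 Hs]] := support x0.
set L := lam^-1.
have L0 : 0 < L by rewrite invr_gt0.
have sL0 : 0 <= s * L by rewrite mulr_ge0 // ltW.
set k := Num.truncn (s * L).
have /andP [kle klt] := Num.Theory.truncn_itv sL0.
rewrite -/k in kle klt.
pose b : mi d := fun j => if j == i then k else 0%N.
apply: le_ereal_sup_tmp.
exists (ln (`|\prod_(j < d) (mi_sqrt R a j / h) ^+ b j| / @Wlam R om lam d b))%:E.
  exists b => // j; rewrite /b; case: eqP => // -> vi0.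
  by move: v0; rewrite -/v /v vi0 ltxx.
have e1 : \prod_(j < d) (mi_sqrt R a j / h) ^+ b j = v ^+ k.
  rewrite (bigD1 i) //= /b eqxx big1 ?mulr1 // => j /negbTE ->; exact: expr0.
have e2 : mi_abs b = k.
  rewrite /mi_abs (bigD1 i) //= /b eqxx big1 ?addn0 // => j /negbTE ->; done.
rewrite e1 ger0_norm ?exprn_ge0 ?(ltW v0) // ln_term ?exprn_gt0 // e2 -/L.
rewrite lnXn // -[ln v *+ k]mulr_natl lee_fin.
have kR : k%:R <= s * L by [].
have klam : lam * k%:R <= s.
  by rewrite -(ler_pM2l L0) mulrA mulVf ?gt_eqF // mul1r mulrC.
have Hps : ps (lam * k%:R) <= s * x - phi x.
  apply: ps_lub; first by rewrite mulr_ge0 ?ler0n // ltW.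
  move=> t t0; have := Hs t t0.
  have : t * (lam * k%:R) <= t * s by rewrite ler_wpM2l.
  move=> h1 h2; rewrite /x; lra.
rewrite /phi /phi_om lnK ?posrE // in Hps.
have H2 : L * ps (lam * k%:R) <= L * (s * x - om v) by rewrite ler_wpM2l // ltW.
have e3 : L * (s * x - om v) = s * L * x - L * om v by ring.
have H3 : (s * L - 1) * x <= k%:R * x.
  rewrite ler_wpM2r //; have := klt; rewrite -natr1; lra.
rewrite /x in e3 H3 H2 *.
have e4 : om v / lam = L * om v by rewrite mulrC.
lra.
Qed.

Lemma exists_max (a : mi d) : (0 < mi_abs a)%N -> exists i, (mi_abs a <= d * a i)%N.
Proof.
move=> apos; case: (pickP (fun _ : 'I_d => true)) => [i0 _|none]; last first.
  by move: apos; rewrite /mi_abs big1 // => i _; have := none i.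
case: (@arg_maxnP _ i0 predT a) => // i _ Hi; exists i.
rewrite /mi_abs; apply: (@leq_trans (\sum_(j < d) a i)).
  by apply: leq_sum => j _; apply: Hi.
by rewrite sum_nat_const card_ord.
Qed.

Lemma omegaM_lb lam h : 0 < lam -> 0 < h -> exists C : R, forall a : mi d,
  ((om (Num.sqrt (mi_abs a)%:R / (h * (d.+1)%:R)) / (2 * lam) - C)%R%:E
     <= omegaM (@Wlam R om lam d) (fun j => (mi_sqrt R a j / h)%R))%E.
Proof.
move=> l0 h0.
have l2 : 0 < 2 * lam by rewrite mulr_gt0.
have [T HT] : exists T : R, forall t, T <= t -> `|ln t| <= (2 * lam)^-1 * `|om t|.
  by apply: om_gamma; rewrite invr_gt0.
set T1 := Num.max T 1.
have T11 : 1 <= T1 by rewrite le_max lexx orbT.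
have T1T : T <= T1 by rewrite le_max lexx.
exists (om T1 / (2 * lam)) => a.
set D : R := (d.+1)%:R.
have D0 : 0 < D by rewrite ltr0n.
set w := Num.sqrt (mi_abs a)%:R / (h * D).
have w0 : 0 <= w by rewrite divr_ge0 ?sqrtr_ge0 // mulr_ge0 ?ltW.
have small : om w <= om T1 ->
    ((om w / (2 * lam) - om T1 / (2 * lam))%R%:E
     <= omegaM (@Wlam R om lam d) (fun j => (mi_sqrt R a j / h)%R))%E.
  move=> hw; apply: (@le_trans _ _ 0%E); last exact: omegaM_ge0.
  rewrite lee_fin subr_le0.
  by rewrite ler_pM2r // invr_gt0.
case: (posnP (mi_abs a)) => [r0|rpos].
  apply: small; apply: om_mono => //.
  by rewrite /w r0 sqrtr0 mul0r; lra.
have [i Hi] := exists_max a rpos.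
set v := mi_sqrt R a i / h.
have wv : w <= v.
  rewrite /w /v ler_pdivrMr ?mulr_gt0 //.
  have -> : mi_sqrt R a i / h * (h * D) = Num.sqrt (D ^+ 2 * (a i)%:R).
    rewrite sqrtrM ?exprn_ge0 ?ltW // sqrtr_sqr ger0_norm ?ltW //.
    by rewrite /mi_sqrt; field; rewrite gt_eqF.
  rewrite ler_sqrt ?mulr_ge0 ?exprn_ge0 ?ler0n ?(ltW D0) //.
  rewrite /D -natrX -natrM ler_nat; apply: (leq_trans Hi); rewrite leq_mul2r.
  by apply/orP; right; rewrite expnS (leq_trans (leqnSn d)) // leq_pmulr.
have [vT|Tv] := ltP v T1.
  apply: small; apply: (le_trans (om_mono _ _ w0 wv)); apply: om_mono; last exact: ltW.
  exact: le_trans w0 wv.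
have v1 : 1 <= v := le_trans T11 Tv.
have v0 : 0 <= v := le_trans ler01 v1.
apply: (le_trans _ (omegaM_lb1 _ _ _ _ l0 h0 v1)); rewrite lee_fin -/v.
have := HT v (le_trans T1T Tv).
rewrite ger0_norm ?ln_ge0 // ger0_norm ?om_ge0 // => hl.
have owv := om_mono _ _ w0 wv.
have oT := om_ge0 _ (le_trans ler01 T11).
have Lpos : 0 < (2 * lam)^-1 by rewrite invr_gt0.
have h1 : om w * (2 * lam)^-1 <= om v * (2 * lam)^-1 by rewrite ler_pM2r.
have h2 : 0 <= om T1 * (2 * lam)^-1 := mulr_ge0 oT (ltW Lpos).
have e : om v / lam = 2 * ((2 * lam)^-1 * om v).
  by field; rewrite gt_eqF.
lra.
Qed.

Lemma eucl_div j (a : mi d) : 0 < j ->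
  eucl (fun i => mi_sqrt R a i / j) = Num.sqrt (mi_abs a)%:R / j.
Proof.
move=> j0; rewrite /eucl.
have -> : \sum_(i < d) (mi_sqrt R a i / j) ^+ 2 = (mi_abs a)%:R * (j^-1) ^+ 2.
  rewrite /mi_abs natr_sum mulr_suml; apply: eq_bigr => i _.
  by rewrite /mi_sqrt exprMn sqr_sqrtr ?ler0n.
by rewrite sqrtrM ?ler0n // sqrtr_sqr ger0_norm // invr_ge0 ltW.
Qed.

Lemma eucl_mul j (a : mi d) : 0 <= j ->
  eucl (fun i => j * mi_sqrt R a i) = j * Num.sqrt (mi_abs a)%:R.
Proof.
move=> j0; rewrite /eucl.
have -> : \sum_(i < d) (j * mi_sqrt R a i) ^+ 2 = j ^+ 2 * (mi_abs a)%:R.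
  rewrite /mi_abs natr_sum mulr_sumr; apply: eq_bigr => i _.
  by rewrite /mi_sqrt exprMn sqr_sqrtr ?ler0n.
by rewrite sqrtrM ?exprn_ge0 // sqrtr_sqr ger0_norm.
Qed.

Lemma om1_ge0 : 0 <= om 1.
Proof. by apply: om_ge0. Qed.

Lemma cmp_I1 n (c : seqC R d) :
  (norm_M_inf om n c <= (expR (om 1 / n.+1%:R))%:E * norm_om_inf om n c)%E.
Proof.
apply: wnorm_le; first exact: expR_ge0.
move=> a; set j : R := n.+1%:R.
have j0 : 0 < j by rewrite ltr0Sn.
rewrite eucl_div //.
apply: (@le_trans _ _ (expeR (((om (Num.sqrt (mi_abs a)%:R / j) + om 1) / j)%R%:E))).
  by rewrite lee_expeR; apply: omegaM_ub.
rewrite /= -EFinM lee_fin -expRD ler_expR.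
by rewrite le_eqVlt; apply/orP; left; apply/eqP; ring.
Qed.

Lemma cmp_I2 lam h : 0 < lam -> 0 < h -> exists n, exists C : R, 0 < C /\
  forall c : seqC R d, (norm_om_inf om n c <= C%:E * normMh (@Wlam R om lam d) h c)%E.
Proof.
move=> l0 h0; have [C0 HC0] := omegaM_lb _ _ l0 h0.
set D : R := (d.+1)%:R.
have D0 : 0 < D by rewrite ltr0n.
exists (Num.truncn (h * D + 2 * lam)), (expR C0); split; first exact: expR_gt0.
move=> c; apply: wnorm_le; first exact: expR_ge0.
move=> a; set j : R := (Num.truncn (h * D + 2 * lam)).+1%:R.
have hj : h * D + 2 * lam < j by apply: Num.Theory.truncnS_gt.
have hD0 : 0 < h * D by rewrite mulr_gt0.
have j0 : 0 < j by rewrite ltr0Sn.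
rewrite eucl_div //.
have lb := HC0 a; rewrite -lee_expeR /= in lb.
have Cge : (0 <= (expR C0)%:E)%E by rewrite lee_fin expR_ge0.
apply: (le_trans _ (lee_wpmul2l Cge lb)).
rewrite -EFinM lee_fin -expRD ler_expR addrC subrK.
set u := Num.sqrt (mi_abs a)%:R.
have u0 : 0 <= u by apply: sqrtr_ge0.
have uu : u / j <= u / (h * D).
  by rewrite ler_wpM2l // lef_pV2 ?posrE //; lra.
have om_le := om_mono _ _ (divr_ge0 u0 (ltW j0)) uu.
have omp := om_ge0 _ (divr_ge0 u0 (ltW j0)).
have l2 : 0 < 2 * lam by rewrite mulr_gt0.
apply: (@le_trans _ _ ((2 * lam)^-1 * om (u / j))).
  by rewrite ler_wpM2r // lef_pV2 ?posrE //; lra.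
by rewrite mulrC ler_wpM2r // invr_ge0 ltW.
Qed.

Lemma cmp_P1 lam h : 0 < lam -> 0 < h -> exists n, exists C : R, 0 < C /\
  forall c : seqC R d, (normMh (@Wlam R om lam d) h c <= C%:E * norm_om_proj om n c)%E.
Proof.
move=> l0 h0.
exists (Num.truncn (lam^-1 + h^-1)), (expR (om 1 / lam)); split; first exact: expR_gt0.
move=> c; apply: wnorm_le; first exact: expR_ge0.
move=> a; set j : R := (Num.truncn (lam^-1 + h^-1)).+1%:R.
have hj : lam^-1 + h^-1 < j by apply: Num.Theory.truncnS_gt.
have li : 0 < lam^-1 by rewrite invr_gt0.
have hi : 0 < h^-1 by rewrite invr_gt0.
have j0 : 0 < j by rewrite ltr0Sn.
rewrite eucl_mul ?(ltW j0) //.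
apply: (@le_trans _ _ (expeR (((om (Num.sqrt (mi_abs a)%:R / h) + om 1) / lam)%R%:E))).
  by rewrite lee_expeR; apply: omegaM_ub.
rewrite /= -EFinM lee_fin -expRD ler_expR.
set u := Num.sqrt (mi_abs a)%:R.
have u0 : 0 <= u by apply: sqrtr_ge0.
have uu : u / h <= j * u by rewrite mulrC ler_wpM2r //; lra.
have om_le := om_mono _ _ (divr_ge0 u0 (ltW h0)) uu.
have omp := om_ge0 _ (divr_ge0 u0 (ltW h0)).
have e : (om (u / h) + om 1) / lam = om 1 / lam + lam^-1 * om (u / h).
  by ring.
rewrite e lerD2l.
apply: (@le_trans _ _ (j * om (u / h))).
  by rewrite ler_wpM2r //; lra.
by rewrite ler_wpM2l // ltW.
Qed.

Lemma cmp_P2 n : exists m, exists C : R, 0 < C /\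
  forall c : seqC R d, (norm_om_proj om n c <= C%:E * norm_M_proj om m c)%E.
Proof.
set M := (2 * (n.+1 * d.+1))%N.
have M0 : (0 < M)%N by rewrite /M !muln_gt0.
exists M.-1; rewrite /norm_M_proj prednK //.
set j : R := n.+1%:R.
set D : R := (d.+1)%:R.
have j0 : 0 < j by rewrite ltr0Sn.
have D1 : 1 <= D by rewrite ler1n.
have eM : (M%:R : R) = 2 * (j * D) by rewrite /M !natrM.
have M0' : 0 < (M%:R : R) by rewrite ltr0n.
have Mi : 0 < (M%:R : R)^-1 by rewrite invr_gt0.
have [C0 HC0] := omegaM_lb _ _ Mi Mi.
exists (expR C0); split; first exact: expR_gt0.
move=> c; apply: wnorm_le; first exact: expR_ge0.
move=> a; rewrite -/j eucl_mul ?(ltW j0) //.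
have lb := HC0 a; rewrite -lee_expeR /= in lb.
have Cge : (0 <= (expR C0)%:E)%E by rewrite lee_fin expR_ge0.
apply: (le_trans _ (lee_wpmul2l Cge lb)).
rewrite -EFinM lee_fin -expRD ler_expR addrC subrK.
set u := Num.sqrt (mi_abs a)%:R.
have u0 : 0 <= u by apply: sqrtr_ge0.
have e1 : u / ((M%:R)^-1 * D) = 2 * j * u.
  by rewrite eM; field; rewrite !gt_eqF //; lra.
have e2 : (2 * (M%:R)^-1)^-1 = j * D.
  by rewrite eM; field; rewrite !gt_eqF //; lra.
rewrite -/D e1 e2.
have ju : 0 <= j * u by rewrite mulr_ge0 // ltW.
have uu : j * u <= 2 * j * u by rewrite -mulrA ler_peMl //; lra.
have om_le := om_mono _ _ ju uu.
have omp := om_ge0 _ ju.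
rewrite (mulrC j D); apply: (@le_trans _ _ (j * om (2 * j * u))).
  by rewrite ler_wpM2l // ltW.
have X0 : 0 <= om (2 * j * u) by apply: om_ge0; rewrite mulr_ge0 // mulr_ge0 // ltW.
set X := om (2 * j * u) in X0 *.
have jX : 0 <= j * X by rewrite mulr_ge0 // ltW.
nra.
Qed.

Lemma main_sec :
  (@Lam_om_inf R om d = @Lam_M_inf R om d /\
   forall U : set (seqC R d),
     lc_ind_open (@norm_om_inf R om d) (@Lam_om_inf R om d) U <->
     lc_ind_open (@norm_M_inf R om d) (@Lam_M_inf R om d) U) /\
  (@Lam_om_proj R om d = @Lam_M_proj R om d /\
   forall U : set (seqC R d),
     lc_proj_open (@norm_om_proj R om d) (@Lam_om_proj R om d) U <->
     lc_proj_open (@norm_M_proj R om d) (@Lam_M_proj R om d) U).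
Proof.
have Einf : @Lam_om_inf R om d = @Lam_M_inf R om d.
  apply/seteqP; split => c.
    move=> [n hn]; exists n.+1%:R, n.+1%:R; split; first by rewrite ltr0Sn.
    split; first by rewrite ltr0Sn.
    apply: le_lt_trans (cmp_I1 n c) _; apply: fin_mulC => //; exact: expR_ge0.
  move=> [lam [h [l0 [h0 hc]]]]; have [n [C [C0 HC]]] := cmp_I2 _ _ l0 h0.
  exists n; apply: le_lt_trans (HC c) _; exact: fin_mulC (ltW C0) hc.
have Eproj : @Lam_om_proj R om d = @Lam_M_proj R om d.
  apply/seteqP; split => c.
    move=> hc lam h l0 h0; have [n [C [C0 HC]]] := cmp_P1 _ _ l0 h0.
    apply: le_lt_trans (HC c) _; exact: fin_mulC (ltW C0) (hc n).
  move=> hc n; have [m [C [C0 HC]]] := cmp_P2 n.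
  apply: le_lt_trans (HC c) _; apply: fin_mulC (ltW C0) _.
  by apply: hc; rewrite invr_gt0 ltr0Sn.
split; split => //; move=> U.
  rewrite -Einf; apply: ind_open_iff.
    move=> m; have [n [C [C0 HC]]] := @cmp_I2 m.+1%:R m.+1%:R (ltr0Sn _ _) (ltr0Sn _ _).
    by exists n, C; split.
  move=> m; exists m, (expR (om 1 / m.+1%:R)); split; first exact: expR_gt0.
  exact: cmp_I1.
rewrite -Eproj; apply: proj_open_iff.
  move=> m; exact: cmp_P2.
move=> m; have hm : 0 < (m.+1%:R : R)^-1 by rewrite invr_gt0 ltr0Sn.
have [n [C [C0 HC]]] := cmp_P1 _ _ hm hm.
by exists n, C; split.
Qed.
End W.

Theorem proposition6p8 (R : realType) (d : nat) (om : R -> R) :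
  is_weight om ->
  (@Lam_om_inf R om d = @Lam_M_inf R om d /\
   forall U : set (seqC R d),
     lc_ind_open (@norm_om_inf R om d) (@Lam_om_inf R om d) U <->
     lc_ind_open (@norm_M_inf R om d) (@Lam_M_inf R om d) U) /\
  (@Lam_om_proj R om d = @Lam_M_proj R om d /\
   forall U : set (seqC R d),
     lc_proj_open (@norm_om_proj R om d) (@Lam_om_proj R om d) U <->
     lc_proj_open (@norm_M_proj R om d) (@Lam_M_proj R om d) U).
Proof.
move=> [_ [om_ge0 [om_mono [_ [_ [om_gamma om_conv]]]]]].
by apply: main_sec.
Qed.
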